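(* Let $M\ge0$. There is no infinite antichain $S_1,S_2,\dots$ in $(\mathrm{RL},\le_{RL})$, with $S_i$ of type $(d_i,n_i)$, for which the sequence $(d_i)_i$ is bounded.
   Context: Fix an integer $M\ge0$. A reading list of type $(d,n)$ is a tuple $S=(S^1,\dots,S^n)$ of $d$-element subsets of $[Md]=\{1,\dots,Md\}$ (each $S^i$ viewed as an increasing word). $\mathrm{RL}$ denotes the set of all reading lists of all types. For $S=(S^1,\dots,S^n)$ of type $(d,n)$ and $T=(T^1,\dots,T^m)$ of type $(e,m)$, define $S\le_{RL}T$ iff there exist indices $1\le k_1<k_2<\cdots<k_n\le m$ and maps $f_i:S^i\to T^{k_i}$ ($i=1,\dots,n$), each strictly increasing, such that $f_i(x)=f_j(x)$ for all $i,j$ and all $x\in S^i\cap S^j$. An antichain is a sequence of pairwise incomparable elements. *)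

(* Defs.v *)
From mathcomp Require Import all_boot.
Set Implicit Arguments. Unset Strict Implicit. Unset Printing Implicit Defensive.

(* A reading list of type (d,n) with parameter M: a list of n words, each the
   increasing word of a d-element subset of [Md] = {1,...,M*d}. *)
Definition is_reading_list (M d : nat) (S : seq (seq nat)) : bool :=
  all (fun s => [&& sorted ltn s, size s == d & all (fun x => 1 <= x <= M * d) s]) S.

(* S <=_RL T : there are indices k_0 < ... < k_{n-1} < size T (0-based) and
   maps f_i : S^i -> T^{k_i}, strictly increasing, agreeing on intersections. *)
Definition rl_le (S T : seq (seq nat)) : Prop :=
  exists k : nat -> nat,
    (forall i, i.+1 < size S -> k i < k i.+1) /\
    (forall i, i < size S -> k i < size T) /\
    exists f : nat -> nat -> nat,
      (forall i x, i < size S -> x \in nth [::] S i ->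
                   f i x \in nth [::] T (k i)) /\
      (forall i x y, i < size S -> x \in nth [::] S i -> y \in nth [::] S i ->
                     x < y -> f i x < f i y) /\
      (forall i j x, i < size S -> j < size S ->
                     x \in nth [::] S i -> x \in nth [::] S j -> f i x = f j x).

(* Main.v *)
From Stdlib Require Import Classical ClassicalEpsilon.
Require Import Defs.
From mathcomp Require Import all_boot.

Lemma pigeon (T : eqType) (L : seq T) (h : nat -> T) :
  (forall n, h n \in L) -> exists a, forall N, exists n, N <= n /\ h n = a.
Proof.
move=> hL; apply: NNPP => H.
have Hb: forall a, exists N, forall n, N <= n -> h n != a.
  move=> a; apply: NNPP => H2; apply: H; exists a => N; apply: NNPP => H3.
  apply: H2; exists N => n Nn; apply/eqP => e; apply: H3; by exists n.
have: forall L' : seq T, exists N, forall n, N <= n -> h n \notin L'.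
  elim=> [|x L' [N1 IH]]; first by exists 0.
  have [N2 H2] := Hb x. exists (maxn N1 N2) => n Hn.
  have h1 : N1 <= n := leq_trans (leq_maxl _ _) Hn.
  have h2 : N2 <= n := leq_trans (leq_maxr _ _) Hn.
  by rewrite in_cons negb_or (H2 n h2) (IH n h1).
move/(_ L) => [N HN]. by have := HN N (leqnn N); rewrite hL.
Qed.

Lemma min_exists (P : nat -> Prop) n : P n -> exists m, P m /\ forall k, P k -> m <= k.
Proof.
elim/ltn_ind: n => n IH Pn.
case: (classic (exists m, m < n /\ P m)) => [[m [lt Pm]]|no].
  exact: IH m lt Pm.
exists n; split => // m Pm. rewrite leqNgt; apply/negP => lt. apply: no; eauto.
Qed.

Definition okL {T : eqType} (L : seq T) (h : nat -> seq T) := forall n, all (mem L) (h n).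
Definition badS {T : eqType} (h : nat -> seq T) := forall i j, i < j -> ~ subseq (h i) (h j).
Definition extP {T : eqType} (L : seq T) (l : seq (seq T)) :=
  exists h, okL L h /\ badS h /\ forall i, i < size l -> h i = nth [::] l i.

Lemma step {T : eqType} (L : seq T) (l : seq (seq T)) : exists w,
  extP L l -> extP L (rcons l w) /\ forall w', extP L (rcons l w') -> size w <= size w'.
Proof.
case: (classic (extP L l)) => [e|ne]; last by exists [::].
have P0 : exists w, size w = size w /\ extP L (rcons l w).
  case: e => h [ok [bd ag]]. exists (h (size l)); split => //.
  exists h; split => //; split => // i; rewrite size_rcons ltnS leq_eqVlt nth_rcons.
  by case/orP => [/eqP ->|lt]; rewrite ?ltnn ?eqxx // lt ag.
case: P0 => w0 P0.
have [m [[w [sw ew]] mn]] := min_exists (fun m => exists w, size w = m /\ extP L (rcons l w)) (size w0) (ex_intro _ w0 P0).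
exists w => _; split => // w' ew'. rewrite sw; apply: mn; by exists w'.
Qed.

Definition nextw {T : eqType} (L : seq T) (l : seq (seq T)) : seq T :=
  proj1_sig (constructive_indefinite_description _ (step L l)).

Lemma nextwP {T : eqType} (L : seq T) l :
  extP L l -> extP L (rcons l (nextw L l)) /\
  forall w', extP L (rcons l w') -> size (nextw L l) <= size w'.
Proof. rewrite /nextw; case: constructive_indefinite_description => w /= H; exact: H. Qed.

Fixpoint pref {T : eqType} (L : seq T) n : seq (seq T) :=
  if n is n'.+1 then rcons (pref L n') (nextw L (pref L n')) else [::].

Lemma size_pref {T : eqType} (L : seq T) n : size (pref L n) = n.
Proof. by elim: n => //= n IH; rewrite size_rcons IH. Qed.

Lemma nth_pref {T : eqType} (L : seq T) n i : i < n ->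
  nth [::] (pref L n) i = nextw L (pref L i).
Proof.
elim: n => // n IH; rewrite ltnS leq_eqVlt => /orP[/eqP ->|lt] /=;
  rewrite nth_rcons size_pref ?ltnn ?eqxx //.
by rewrite lt IH.
Qed.

Lemma sub_behead {T : eqType} (s : seq T) : subseq (behead s) s.
Proof. case: s => //= x s; exact: subseq_cons. Qed.

Lemma higman {T : eqType} (L : seq T) (g : nat -> seq T) :
  okL L g -> exists i j, i < j /\ subseq (g i) (g j).
Proof.
move=> okg; apply: NNPP => nb.
have bg : badS g.
  move=> i j ij s; apply: nb; by exists i, j.
have e0 : extP L [::] by exists g.
have ext : forall n, extP L (pref L n).
  elim=> // n IH; exact: (@nextwP _ L (pref L n) IH).1.
pose w n := nextw L (pref L n).
have wext : forall n, exists h, okL L h /\ badS h /\ forall i, i <= n -> h i = w i.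
  move=> n; have := ext n.+1; case=> h [ok [bd ag]]; exists h; split => //; split => // i lt.
  by rewrite ag ?size_pref // nth_pref.
have wbad : badS w.
  move=> i j ij; have [h [_ [bd ag]]] := wext j.
  rewrite -ag ?(ltnW ij) // -(ag j) //; exact: bd.
have wok : okL L w.
  move=> n; have [h [ok [_ ag]]] := wext n; rewrite -ag //.
have wne : forall n, w n != [::].
  move=> n; apply/eqP => e; apply: (wbad n n.+1) => //; rewrite e; exact: sub0seq.
have [x0 _] : exists x0 : T, True.
  by move: (wne 0); case: (w 0) => // x _ _; exists x.
have hL : forall n, head x0 (w n) \in L.
  move=> n; move: (wok n) (wne n); case: (w n) => //= x s /andP[] //.
have [a inf] := @pigeon _ L _ hL.
pose nextn N := proj1_sig (constructive_indefinite_description _ (inf N)).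
have nextnP : forall N, N <= nextn N /\ head x0 (w (nextn N)) = a.
  move=> N; rewrite /nextn; case: constructive_indefinite_description => //.
pose phi := fix phi k := if k is k'.+1 then nextn (phi k').+1 else nextn 0.
have phia : forall k, head x0 (w (phi k)) = a by case=> [|k]; apply: (nextnP _).2.
have phiS : forall k, phi k < phi k.+1 by move=> k; apply: (nextnP _).1.
have phimono : forall k l, k < l -> phi k < phi l.
  exact: (@homo_ltn nat phi (fun a b => a < b) (fun y x z => @ltn_trans y x z) phiS).
have phile : forall k l, k <= l -> phi k <= phi l.
  move=> k l; rewrite leq_eqVlt => /orP[/eqP ->//|lt]; exact: ltnW (phimono _ _ lt).
have wa : forall k, w (phi k) = a :: behead (w (phi k)).
  move=> k; move: (phia k) (wne (phi k)); case: (w (phi k)) => //= y s -> //.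
set n0 := phi 0.
pose g' i := if i < n0 then w i else behead (w (phi (i - n0))).
have eg : extP L (rcons (pref L n0) (behead (w n0))).
  exists g'; split; [|split].
  - move=> i; rewrite /g'; case: ifP => _; first exact: wok.
    move: (wok (phi (i - n0))); by case: (w _) => //= y s /andP[].
  - move=> i1 j ij; rewrite /g'.
    case: (ltnP i1 n0) => hi; case: (ltnP j n0) => hj.
    + exact: wbad.
    + move=> s; apply: (wbad i1 (phi (j - n0))).
        exact: leq_trans hi (phile _ _ (leq0n _)).
      exact: subseq_trans s (sub_behead _).
    + by have := leq_ltn_trans hi (ltn_trans ij hj); rewrite ltnn.
    + have lt : phi (i1 - n0) < phi (j - n0).
        apply: phimono; rewrite ltn_sub2rE //.
      move=> s; apply: (wbad _ _ lt); rewrite (wa (i1 - n0)) (wa (j - n0)) /=.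
      by rewrite eqxx.
  - move=> i; rewrite size_rcons size_pref ltnS leq_eqVlt nth_rcons size_pref /g'.
    case/orP => [/eqP ->|lt]; first by rewrite ltnn eqxx subnn.
    by rewrite lt nth_pref.
have := (@nextwP _ L (pref L n0) (ext n0)).2 _ eg.
rewrite -/(w n0); move: (wne n0); case: (w n0) => //= y s _; by rewrite ltnn.
Qed.

Fixpoint subs (r : seq nat) : seq (seq nat) :=
  if r is x :: r' then [seq x :: t | t <- subs r'] ++ subs r' else [:: [::]].

Lemma subs_mem r s : subseq s r -> s \in subs r.
Proof.
elim: r s => [|x r IH] [|y s] //=.
- move=> _; rewrite mem_cat; apply/orP; right; apply: IH; exact: sub0seq.
- case: ifP => [/eqP -> sub|_ sub]; rewrite mem_cat; apply/orP; [left|right].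
    by rewrite mem_map; [apply: IH | move=> u v []].
  exact: IH.
Qed.

Lemma sorted_sub_iota (s : seq nat) N : sorted ltn s -> all (fun x => x < N) s ->
  subseq s (iota 0 N).
Proof.
move=> ss als.
have -> : s = filter (mem s) (iota 0 N).
  apply: (irr_sorted_eq ltn_trans ltnn) => //.
    exact: (sorted_filter ltn_trans _ (iota_ltn_sorted _ _)).
  move=> x; rewrite mem_filter mem_iota /=; case xs: (x \in s) => //=.
  by rewrite (allP als x xs).
exact: filter_subseq.
Qed.

Lemma subseq_rl (S T : seq (seq nat)) : subseq S T -> rl_le S T.
Proof.
have key : forall (T S : seq (seq nat)), subseq S T -> exists k : nat -> nat,
    (forall i, i.+1 < size S -> k i < k i.+1) /\
    (forall i, i < size S -> k i < size T) /\
    (forall i, i < size S -> nth [::] S i = nth [::] T (k i)).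
  elim=> [|y T' IH] [|x S'] //=.
  - by move=> _; exists id.
  - by move=> _; exists id.
  - case: ifP => [/eqP -> sub|_ sub].
      have [k [k1 [k2 k3]]] := IH _ sub.
      exists (fun i => if i is i'.+1 then (k i').+1 else 0); split; [|split].
      + by case=> [|i] //= h; rewrite ltnS k1.
      + by case=> [|i] //= h; rewrite ltnS k2.
      + by case=> [|i] //= h; rewrite k3.
    have [k [k1 [k2 k3]]] := IH _ sub.
    exists (fun i => (k i).+1); split; [|split] => i h /=.
    + by rewrite ltnS k1.
    + by rewrite ltnS k2.
    + by rewrite k3.
move=> /(key T) [k [k1 [k2 k3]]].
exists k; split => //; split => //; exists (fun _ x => x); split; [|split] => //.
by move=> i x h; rewrite k3.
Qed.

Theorem mainTheorem6 (M : nat) (d : nat -> nat) (S : nat -> seq (seq nat)) :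
  (forall i, is_reading_list M (d i) (S i)) ->
  (exists B, forall i, d i <= B) ->
  ~ (forall i j, i <> j -> ~ rl_le (S i) (S j)).
Proof.
move=> hS [B hB] anti.
have ok : okL (subs (iota 0 (M * B).+1)) S.
  move=> n; apply/allP => s sS; apply: subs_mem.
  have /andP[ss /andP[_ als]] := allP (hS n) s sS.
  apply: sorted_sub_iota => //; apply/allP => x xs.
  have /andP[_ xm] := allP als x xs.
  by rewrite ltnS (leq_trans xm) // leq_mul2l hB orbT.
have [i [j [ij sub]]] := @higman _ _ _ ok.
apply: (anti i j); last exact: subseq_rl.
by move=> e; rewrite e ltnn in ij.
Qed.
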